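(* Let $N\in\mathbb{N}$ and let $\{g_1,\ldots,g_h\}$ be a generating set for $\Gamma_1(N)$. For $i=1,\ldots,h$, let $\gamma_i\in\langle T,W\rangle g_i\langle T,W\rangle$ be a matrix with top row $(r_i\ \ b_i)$, and choose $m_i\in\mathbb{Z}$ with $m_i\mid\frac{r_i-1}N$. Then for any $q\in\mathbb{N}$ satisfying $(q,Nm_i)=1$ and $q\equiv Nm_ib_i\pmod{r_i}$ for every $i$, we have $H_q\supseteq\Gamma_1(N)$.
   Context: $T=\begin{pmatrix}1&1\\0&1\end{pmatrix}$, $W=\begin{pmatrix}1&0\\N&1\end{pmatrix}$. For $q\in\mathbb{N}$ coprime to $N$, $H_q$ denotes the subgroup of $\Gamma_0(N)$ generated by all matrices $\begin{pmatrix}A&B\\C&D\end{pmatrix}\in\Gamma_0(N)$ with $A=q$. *)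

(* Defs.v *)
From mathcomp Require Import all_boot all_algebra.
Set Implicit Arguments. Unset Strict Implicit. Unset Printing Implicit Defensive.
Import GRing.Theory Num.Theory.
Local Open Scope ring_scope.

Definition mat := 'M[int]_2.

Definition eA (g : mat) : int := g ord0 ord0.
Definition eB (g : mat) : int := g ord0 ord_max.
Definition eC (g : mat) : int := g ord_max ord0.
Definition eD (g : mat) : int := g ord_max ord_max.

Definition SL2 (g : mat) : bool := \det g == 1.

Definition Gamma0 (N : nat) (g : mat) : bool :=
  SL2 g && (N%:Z %| eC g)%Z.

Definition Gamma1 (N : nat) (g : mat) : bool :=
  [&& Gamma0 N g, (eA g == 1 %[mod N%:Z])%Z & (eD g == 1 %[mod N%:Z])%Z].

(* T = [[1,1],[0,1]],  W = [[1,0],[N,1]] *)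
Definition Tmat : mat :=
  \matrix_(i, j) (if (i == ord0) && (j == ord_max) then 1 else (i == j)%:R).
Definition Wmat (N : nat) : mat :=
  \matrix_(i, j) (if (i == ord_max) && (j == ord0) then N%:Z else (i == j)%:R).

Definition group_closed (P : mat -> Prop) : Prop :=
  [/\ P 1%:M, (forall x y, P x -> P y -> P (x *m y)) & (forall x, P x -> P (invmx x))].

Definition gen (S : mat -> Prop) (x : mat) : Prop :=
  forall P : mat -> Prop, group_closed P -> (forall s, S s -> P s) -> P x.

Definition TW (N : nat) : mat -> Prop := gen (fun s => s = Tmat \/ s = Wmat N).

Definition in_TW_double_coset (N : nat) (g gam : mat) : Prop :=
  exists u v, [/\ TW N u, TW N v & gam = u *m g *m v].

Definition Hq (N q : nat) : mat -> Prop :=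
  gen (fun s => Gamma0 N s /\ eA s = q%:Z).

(* Main.v *)
Require Import Defs.
From mathcomp Require Import all_boot all_algebra ring.
Import GRing.Theory Num.Theory.
Local Open Scope ring_scope.
Set Implicit Arguments. Unset Strict Implicit.
Definition mk (a b c d : int) : mat :=
  \matrix_(i, j) if i == ord0 then (if j == ord0 then a else b) else (if j == ord0 then c else d).

Lemma matE (M : mat) : M = mk (eA M) (eB M) (eC M) (eD M).
Proof.
apply/matrixP => i j; rewrite !mxE /eA /eB /eC /eD.
by case: i => [[|[|?]] ?] //; case: j => [[|[|?]] ?] //=; congr (M _ _); apply: val_inj.
Qed.

Lemma mkE a b c d : [/\ eA (mk a b c d) = a, eB (mk a b c d) = b, eC (mk a b c d) = c & eD (mk a b c d) = d].
Proof. by rewrite /eA /eB /eC /eD !mxE. Qed.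

Lemma mk_mul a b c d a' b' c' d' :
  mk a b c d *m mk a' b' c' d' = mk (a*a' + b*c') (a*b' + b*d') (c*a' + d*c') (c*b' + d*d').
Proof.
apply/matrixP => i j; rewrite !mxE !big_ord_recl big_ord0 !mxE /=.
by case: i => [[|[|?]] ?] //; case: j => [[|[|?]] ?] //=; rewrite addr0.
Qed.

Lemma mk_det a b c d : \det (mk a b c d) = a * d - b * c.
Proof.
rewrite (expand_det_row _ ord0) !big_ord_recl big_ord0 /cofactor !det_mx11 !mxE /=.
rewrite addr0 /bump /=. rewrite !expr0 !expr1 !mul1r. 
by rewrite mulN1r mulrN.
Qed.

Lemma mk1 : mk 1 0 0 1 = 1%:M.
Proof.
apply/matrixP => i j; rewrite !mxE.
by case: i => [[|[|?]] ?] //; case: j => [[|[|?]] ?].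
Qed.

Lemma eA_mk a b c d : eA (mk a b c d) = a. Proof. by case: (mkE a b c d). Qed.
Lemma eB_mk a b c d : eB (mk a b c d) = b. Proof. by case: (mkE a b c d). Qed.
Lemma eC_mk a b c d : eC (mk a b c d) = c. Proof. by case: (mkE a b c d). Qed.
Lemma eD_mk a b c d : eD (mk a b c d) = d. Proof. by case: (mkE a b c d). Qed.
Lemma gen_closed S : Defs.group_closed (gen S).
Proof.
split.
- by move=> P [] ? _ _ _.
- move=> x y gx gy P HP HS; case: (HP) => _ HM _; exact: HM (gx P HP HS) (gy P HP HS).
- move=> x gx P HP HS; case: (HP) => _ _ HI; exact: HI (gx P HP HS).
Qed.

Lemma gen_in S x : S x -> gen S x.
Proof. by move=> Sx P _ HS; apply: HS. Qed.

Lemma TmatE : Tmat = mk 1 1 0 1.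
Proof.
apply/matrixP => i j; rewrite !mxE.
by case: i => [[|[|?]] ?] //; case: j => [[|[|?]] ?].
Qed.

Lemma WmatE N : Wmat N = mk 1 0 N%:Z 1.
Proof.
apply/matrixP => i j; rewrite !mxE.
by case: i => [[|[|?]] ?] //; case: j => [[|[|?]] ?].
Qed.

Lemma Gamma1_T N : Gamma1 N Tmat.
Proof.
rewrite TmatE /Gamma1 /Gamma0 /SL2 mk_det; case: (mkE 1 1 0 1) => -> _ -> ->.
by rewrite dvdz0 !eqxx.
Qed.

Lemma Gamma1_W N : Gamma1 N (Wmat N).
Proof.
rewrite WmatE /Gamma1 /Gamma0 /SL2 mk_det; case: (mkE 1 0 N 1) => -> _ -> ->.
by rewrite dvdzz !eqxx.
Qed.

Lemma unit_det1 (M : mat) : \det M = 1 -> M \in unitmx.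
Proof. by move=> h; rewrite unitmxE h unitr1. Qed.

Lemma Gamma1_unit N M : Gamma1 N M -> M \in unitmx.
Proof. by case/and3P => /andP [/eqP h _] _ _; apply: unit_det1. Qed.

Unset Implicit Arguments. Set Strict Implicit.

Theorem lemma4p13 (N h : nat) (g gam : 'I_h -> mat) (m : 'I_h -> int) (q : nat) :
  (0 < N)%N ->
  (forall x, gen (fun s => exists i, s = g i) x <-> Gamma1 N x) ->
  (forall i, in_TW_double_coset N (g i) (gam i)) ->
  (forall i, (m i %| (eA (gam i) - 1) %/ N%:Z)%Z) ->
  (forall i, coprimez q%:Z (N%:Z * m i)) ->
  (forall i, (q%:Z == N%:Z * m i * eB (gam i) %[mod eA (gam i)])%Z) ->
  forall x, Gamma1 N x -> Hq N q x.
Proof.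
move=> _ hG hdc hm hcop hcong x /hG gx.
have HqC : Defs.group_closed (Hq N q) by apply: gen_closed.
case: (HqC) => Hq1 HqM HqI.
have Hqgen : forall M, Gamma0 N M -> eA M = q%:Z -> Hq N q M.
  by move=> M h1 h2; apply: gen_in.
apply: (gx _ HqC) => _ [i ->].
have GC := gen_closed (fun s => exists i, s = g i).
have TWG : forall u, TW N u -> Gamma1 N u.
  move=> u tu; apply/hG; apply: (tu _ GC) => s [->|->]; apply/hG.
    exact: Gamma1_T.
  exact: Gamma1_W.
have [u [v [tu tv egam]]] := hdc i.
have G1gam : Gamma1 N (gam i).
  apply/hG; rewrite egam; case: GC => _ GM _.
  have g1 : gen (fun s : mat => exists i : 'I_h, s = g i) (g i) by apply: gen_in; exists i.
  have g2 := proj2 (hG u) (TWG _ tu).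
  have g3 := proj2 (hG v) (TWG _ tv).
  exact: (GM _ _ (GM _ _ g2 g1) g3).
have [[bu bv] /= hb] := coprimezP _ _ (hcop i).
set Y := mk q%:Z (- bv) (N%:Z * m i) bu.
have detY : \det Y = 1 by rewrite mk_det; apply: (etrans _ hb); ring.
have uY := unit_det1 detY.
have G0Y : forall M, \det M = 1 -> (N%:Z %| eC M)%Z -> Gamma0 N M.
  by move=> M h1 h2; rewrite /Gamma0 /SL2 h1 eqxx.
have HY : Hq N q Y.
  apply: Hqgen; last by case: (mkE q%:Z (- bv) (N%:Z * m i) bu).
  apply: G0Y => //; case: (mkE q%:Z (- bv) (N%:Z * m i) bu) => _ _ -> _.
  exact: dvdz_mulr.
have HTs : forall k, Hq N q (mk 1 k 0 1).
  move=> k; rewrite -(mulKmx uY (mk 1 k 0 1)); apply: HqM; first exact: HqI.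
  apply: Hqgen; rewrite /Y mk_mul.
    apply: G0Y; first by rewrite mk_det; apply: (etrans _ hb); ring.
    by rewrite eC_mk; apply/dvdzP; exists (m i); ring.
  by rewrite eA_mk; ring.
have HW : Hq N q (Wmat N).
  rewrite -(mulmxK uY (Wmat N)) /=; apply: HqM; last exact: HqI.
  rewrite WmatE /Y mk_mul; apply: Hqgen.
    apply: G0Y; first by rewrite mk_det; apply: (etrans _ hb); ring.
    by rewrite eC_mk; apply/dvdzP; exists (q%:Z + m i); ring.
  by rewrite eA_mk; ring.
have HTW : forall u, TW N u -> Hq N q u.
  move=> w tw; apply: (tw _ HqC) => s [->|->]; last exact: HW.
  by rewrite TmatE; apply: HTs.
have uu := Gamma1_unit (TWG _ tu).
have uv := Gamma1_unit (TWG _ tv).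
have eg : g i = invmx u *m gam i *m invmx v.
  by rewrite egam -!mulmxA mulKmx // !mulmxA mulmxK.
suff Hgam : Hq N q (gam i) by rewrite eg; apply: HqM (HqM _ _ (HqI _ (HTW _ tu)) _) (HqI _ (HTW _ tv)).
move: G1gam; rewrite /Gamma1 /Gamma0 /SL2 => /and3P [/andP [/eqP hdet hC] hA _].
move: hA; rewrite eqz_mod_dvd => /dvdzP [a1 ha1].
move: (hm i) => /dvdzP [w hw].
move: (hcong i); rewrite eqz_mod_dvd => /dvdzP [t ht].
move: hC => /dvdzP [c0 hc0].
have hr : eA (gam i) = w * m i * N%:Z + 1.
  have : ((eA (gam i) - 1) %/ N%:Z)%Z * N%:Z = eA (gam i) - 1 by apply: divzK; apply/dvdzP; exists a1.
  by rewrite hw => ->; ring.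
have hq : q%:Z = N%:Z * m i * eB (gam i) + t * eA (gam i).
  by rewrite -ht; ring.
pose s := eB (gam i) + w * t.
pose X := gam i *m mk 1 (- s) 0 1 *m Y.
have HX : Hq N q X.
  apply: Hqgen.
    apply: G0Y.
      by rewrite /X !det_mulmx hdet detY mk_det; ring.
    rewrite /X [gam i]matE hc0 /Y !mk_mul eC_mk; apply/dvdzP.
    exists (c0 * q%:Z + (c0 * N%:Z * (- s) + eD (gam i)) * m i); ring.
  rewrite /X [gam i]matE /Y !mk_mul eA_mk /s.
  rewrite [in RHS]hq [in LHS]hq hr; ring.
have eX : gam i = X *m invmx Y *m mk 1 s 0 1.
  rewrite /X mulmxK // -mulmxA mk_mul (_ : mk _ _ _ _ = 1%:M) ?mulmx1 //.
  rewrite -mk1; congr mk; ring.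
by rewrite eX; apply: HqM (HqM _ _ HX (HqI _ HY)) (HTs s).
Qed.
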